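(* There exists a predicate $b$ that is a super-core of some length-preserving function $f:\{0,1\}^n\to\{0,1\}^n$ computable by polynomial-size circuits if and only if there exists a super-bit $g:\{0,1\}^n\to\{0,1\}^{n+1}$.
   Context: $U_k$ is uniform on $\{0,1\}^k$. A generator $g:\{0,1\}^n\to\{0,1\}^{n+1}$ computable by polynomial-size circuits is a super-bit if for every nondeterministic polynomial-size circuit family $D$ (accepting iff some witness gives output 1), every polynomial $p$ and all sufficiently large $n$, $\Pr[D(U_{n+1})=1]-\Pr[D(g(U_n))=1]<1/p(n)$. A predicate $b$ computable by polynomial-size circuits is a super-core of $f:\{0,1\}^n\to\{0,1\}^{m(n)}$ if there do not exist a nondeterministic polynomial-size circuit family $\mathcal{A}_1$, a co-nondeterministic polynomial-size circuit family $\mathcal{A}_2$ (rejecting iff some witness gives output 0), a polynomial $p$ and infinitely many $n$ such that either $\Pr_{x\in\{0,1\}^n}[\mathcal{A}_1(f(x),1^n)=b(x)=0]+\tfrac12\Pr_{y\in\{0,1\}^{m(n)}}[\mathcal{A}_1(y,1^n)=1]\ge \tfrac12+\tfrac1{p(n)}$ or $\Pr_{x}[\mathcal{A}_2(f(x),1^n)=b(x)=1]+\tfrac12\Pr_{y}[\mathcal{A}_2(y,1^n)=0]\ge \tfrac12+\tfrac1{p(n)}$. *)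

(* Defs.v *)
From mathcomp Require Import all_boot all_order all_algebra.
Set Implicit Arguments. Unset Strict Implicit. Unset Printing Implicit Defensive.
Import Order.TTheory GRing.Theory Num.Theory.
Local Open Scope ring_scope.

Notation bits k := (k.-tuple bool).

Definition prob (k : nat) (P : pred (bits k)) : rat :=
  (#|[set x : bits k | P x]|)%:R / (2 ^ k)%:R.
Arguments prob k P : clear implicits.

(* Boolean circuits (fan-in <= 2, straight-line programs).             *)
(* Wires 0 .. (#inputs - 1) carry the inputs; the k-th gate produces   *)
(* the next wire.  A reference to a wire that does not (yet) exist     *)
(* reads as false.  The output is the list of values of the output     *)
(* wires.                                                              *)
Inductive gate : Type :=
| GConst of bool
| GNot of nat
| GAnd of nat & nat
| GOr of nat & nat.

Definition eval_gate (w : seq bool) (g : gate) : bool :=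
  match g with
  | GConst c => c
  | GNot i => ~~ nth false w i
  | GAnd i j => nth false w i && nth false w j
  | GOr i j => nth false w i || nth false w j
  end.

Record circuit : Type := Circuit { gates : seq gate; outs : seq nat }.

Definition eval (C : circuit) (x : seq bool) : seq bool :=
  let w := foldl (fun w g => rcons w (eval_gate w g)) x (gates C) in
  map (nth false w) (outs C).

Definition csize (C : circuit) : nat := size (gates C) + size (outs C).

Definition out1 (C : circuit) (x : seq bool) : bool := head false (eval C x).

(* A co-nondeterministic circuit rejects iff some witness gives 0,     *)
(* i.e. it accepts iff every witness gives 1.                          *)
Record ncircuit : Type := NCircuit { nc_wit : nat; nc_circ : circuit }.

Definition nsize (D : ncircuit) : nat := nc_wit D + csize (nc_circ D).

Definition nd_accepts (D : ncircuit) (x : seq bool) : bool :=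
  [exists w : bits (nc_wit D), out1 (nc_circ D) (x ++ val w)].

Definition cond_accepts (D : ncircuit) (x : seq bool) : bool :=
  [forall w : bits (nc_wit D), out1 (nc_circ D) (x ++ val w)].

(* Polynomials: rational polynomials with positive leading coefficient *)
(* (so that they are eventually positive).                             *)
Definition positive_poly (p : {poly rat}) : Prop := 0 < lead_coef p.

Definition peval (p : {poly rat}) (n : nat) : rat := p.[n%:R].

Definition eventually (P : nat -> Prop) : Prop :=
  exists N, forall n, (N <= n)%N -> P n.

Definition infinitely_often (P : nat -> Prop) : Prop :=
  forall N, exists n, (N <= n)%N /\ P n.

Definition poly_size (C : nat -> circuit) : Prop :=
  exists q, positive_poly q /\ forall n, (csize (C n))%:R <= peval q n.

Definition npoly_size (D : nat -> ncircuit) : Prop :=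
  exists q, positive_poly q /\ forall n, (nsize (D n))%:R <= peval q n.

Definition poly_computable (m : nat -> nat)
    (h : forall n, bits n -> bits (m n)) : Prop :=
  exists C : nat -> circuit, poly_size C /\
    forall n (x : bits n), eval (C n) (val x) = val (h n x).

Definition poly_computable_pred (b : forall n, bits n -> bool) : Prop :=
  exists C : nat -> circuit, poly_size C /\
    forall n (x : bits n), eval (C n) (val x) = [:: b n x].

Definition super_bit (g : forall n, bits n -> bits n.+1) : Prop :=
  @poly_computable S g /\
  forall D : nat -> ncircuit, npoly_size D ->
  forall p : {poly rat}, positive_poly p ->
  eventually (fun n =>
    prob n.+1 (fun y => nd_accepts (D n) (val y))
    - prob n (fun x => nd_accepts (D n) (val (g n x)))
    < (peval p n)^-1).

(* Super-core.  The family A(n) plays the role of A(., 1^n).           *)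
Definition super_core (m : nat -> nat) (f : forall n, bits n -> bits (m n))
    (b : forall n, bits n -> bool) : Prop :=
  poly_computable_pred b /\
  ~ exists p : {poly rat}, positive_poly p /\
     ((exists A1 : nat -> ncircuit, npoly_size A1 /\
        infinitely_often (fun n =>
          prob n (fun x => ~~ nd_accepts (A1 n) (val (f n x)) && ~~ b n x)
          + 2^-1 * prob (m n) (fun y => nd_accepts (A1 n) (val y))
          >= 2^-1 + (peval p n)^-1))
    \/
      (exists A2 : nat -> ncircuit, npoly_size A2 /\
        infinitely_often (fun n =>
          prob n (fun x => cond_accepts (A2 n) (val (f n x)) && b n x)
          + 2^-1 * prob (m n) (fun y => ~~ cond_accepts (A2 n) (val y))
          >= 2^-1 + (peval p n)^-1))).

(* Main.v *)
Require Import Defs.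
From mathcomp Require Import all_boot all_order all_algebra.
From mathcomp Require Import zify ring lra.
From Stdlib Require Classical_Prop.
Set Implicit Arguments. Unset Strict Implicit. Unset Printing Implicit Defensive.
Import Order.TTheory GRing.Theory Num.Theory.
Definition run (gs : seq gate) (w : seq bool) :=
  foldl (fun w g => rcons w (eval_gate w g)) w gs.

Lemma evalE C x : eval C x = map (nth false (run (gates C) x)) (outs C).
Proof. by []. Qed.

Lemma run_cat gs1 gs2 w : run (gs1 ++ gs2) w = run gs2 (run gs1 w).
Proof. by rewrite /run foldl_cat. Qed.

Lemma size_run gs w : size (run gs w) = size w + size gs.
Proof. elim: gs w => [|g gs IH] w /=; first by rewrite addn0.
by rewrite IH size_rcons addSnnS. Qed.

Lemma run_prefix gs w i : i < size w -> nth false (run gs w) i = nth false w i.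
Proof. elim: gs w => [|g gs IH] w //= Hi.
rewrite IH ?size_rcons; last by lia.
by rewrite nth_rcons Hi. Qed.

Definition ren (r : nat -> nat) (g : gate) :=
  match g with
  | GConst c => GConst c
  | GNot i => GNot (r i)
  | GAnd i j => GAnd (r i) (r j)
  | GOr i j => GOr (r i) (r j)
  end.

Lemma eval_gate_ren r w w' g :
  (forall j, nth false w' (r j) = nth false w j) -> eval_gate w' (ren r g) = eval_gate w g.
Proof. by move=> H; case: g => /= *; rewrite ?H. Qed.

Lemma ren_full w w' r :
  (forall i, i < size w -> r i < size w') ->
  (forall i, i < size w -> nth false w' (r i) = nth false w i) ->
  (forall i, size w <= i -> r i = i - size w + size w') ->
  forall j, nth false w' (r j) = nth false w j.
Proof.
move=> H0 H1 H2 j; case: (ltnP j (size w)) => Hj; first exact: H1.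
rewrite H2 // !nth_default //; lia.
Qed.

Lemma run_ren gs : forall w w' r,
  (forall i, i < size w -> r i < size w') ->
  (forall i, i < size w -> nth false w' (r i) = nth false w i) ->
  (forall i, size w <= i -> r i = i - size w + size w') ->
  forall j, nth false (run (map (ren r) gs) w') (r j) = nth false (run gs w) j.
Proof.
elim: gs => [|g gs IH] w w' r H0 H1 H2 /=; first exact: ren_full.
have F := ren_full H0 H1 H2.
rewrite (eval_gate_ren g F).
apply: IH; rewrite ?size_rcons.
- move=> i Hi; case: (ltnP i (size w)) => Hl; first by have := H0 _ Hl; lia.
  have -> : i = size w by lia. rewrite H2 //; lia.
- move=> i Hi; rewrite !nth_rcons; case: (ltnP i (size w)) => Hl.
    by rewrite H0 // H1.
  have Ei : i = size w by lia.
  by rewrite Ei H2 // subnn add0n !ltnn !eqxx.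
- move=> i Hi; rewrite H2; lia.
Qed.

Lemma out1_nth C z :
  out1 C z = nth false (run (gates C) z) (head (size z + size (gates C)) (outs C)).
Proof.
rewrite /out1 evalE; case: (outs C) => [|o os] //=.
by rewrite nth_default // size_run.
Qed.

Definition negC m C :=
  Circuit (gates C ++ [:: GNot (head (m + size (gates C)) (outs C))]) [:: m + size (gates C)].

Lemma negC_out m C z : size z = m -> out1 (negC m C) z = ~~ out1 C z.
Proof.
move=> Hz; rewrite /out1 evalE /= run_cat /= nth_rcons size_run Hz ltnn eqxx /=.
by rewrite -/(out1 C z) out1_nth Hz.
Qed.

Definition rho m i := if i == 0 then m else if i <= m then i.-1 else i.

Definition fixC m c C :=
  Circuit (GConst c :: map (ren (rho m)) (gates C)) (map (rho m) (outs C)).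

Lemma fixC_eval m c C z : size z = m -> eval (fixC m c C) z = eval C (c :: z).
Proof.
move=> Hz; rewrite !evalE /= -map_comp; apply: eq_map => o /=.
apply: (@run_ren _ (c :: z) (rcons z c)) => [i|i|i] /=; rewrite ?size_rcons Hz /rho.
- case: i => [|i] //= Hi; case: ifP => //; lia.
- case: i => [|i] /= Hi; rewrite nth_rcons.
    by rewrite Hz ltnn eqxx.
  have -> : (i.+1 <= m)%N by lia.
  by rewrite /= Hz; have -> : (i < m)%N by lia.
- move=> Hi; have -> : (i == 0) = false by lia.
  have -> : (i <= m)%N = false by lia. lia.
Qed.

Lemma fixC_out m c C z : size z = m -> out1 (fixC m c C) z = out1 C (c :: z).
Proof. by move=> Hz; rewrite /out1 fixC_eval. Qed.

Definition frontC (mk : nat -> nat -> gate) m C :=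
  Circuit (map (ren succn) (gates C) ++
      [:: mk (head (m + size (gates C)) (outs C)).+1 0])
    [:: m.+1 + size (gates C)].

Lemma frontC_run C z c j :
  nth false (run (map (ren succn) (gates C)) (c :: z)) j.+1 = nth false (run (gates C) z) j.
Proof.
apply: (@run_ren _ z (c :: z) succn) => [i|i|i] //= Hi; lia.
Qed.

Lemma orC_out m C z c : size z = m ->
  out1 (frontC GOr m C) (c :: z) = out1 C z || c.
Proof.
move=> Hz; rewrite /out1 evalE /= run_cat /= nth_rcons size_run size_map /= Hz ltnn eqxx /=.
by rewrite frontC_run [X in _ || X]run_prefix //= -[head false (eval C z)]/(out1 C z) out1_nth Hz.
Qed.

Lemma andC_out m C z c : size z = m ->
  out1 (frontC GAnd m C) (c :: z) = out1 C z && c.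
Proof.
move=> Hz; rewrite /out1 evalE /= run_cat /= nth_rcons size_run size_map /= Hz ltnn eqxx /=.
by rewrite frontC_run [X in _ && X]run_prefix //= -[head false (eval C z)]/(out1 C z) out1_nth Hz.
Qed.

Definition sh n d i := if (i < n)%N then i else i + d.
Definition clamp a b i := if (i < a)%N then i else b.

Definition parC n Cb Cf :=
  let d := size (gates Cf) in
  Circuit (gates Cf ++ map (ren (sh n d)) (gates Cb))
    (map (sh n d) (outs Cb) ++ map (clamp (n + d) (n + d + size (gates Cb))) (outs Cf)).

Lemma parC_eval n Cb Cf x : size x = n -> eval (parC n Cb Cf) x = eval Cb x ++ eval Cf x.
Proof.
move=> Hx; rewrite !evalE /= map_cat run_cat -!map_comp; congr (_ ++ _).
  apply: eq_map => o /=.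
  apply: (@run_ren _ x (run (gates Cf) x)) => [i|i|i]; rewrite ?size_run Hx /sh => Hi.
  - by rewrite Hi; lia.
  - by rewrite Hi run_prefix // Hx.
  - have -> : (i < n)%N = false by lia. lia.
apply: eq_map => o /=; rewrite /clamp; case: ifP => Ho.
  by rewrite run_prefix // size_run Hx.
rewrite nth_default; last by rewrite !size_run size_map Hx.
by rewrite nth_default // size_run Hx leqNgt Ho.
Qed.

Local Open Scope ring_scope.
Lemma positive_add p q : positive_poly p -> positive_poly q -> positive_poly (p + q).
Proof.
rewrite /positive_poly => Hp Hq.
have Hp0 : p != 0 by rewrite -lead_coef_eq0 gt_eqF.
have Hq0 : q != 0 by rewrite -lead_coef_eq0 gt_eqF.
case: (ltngtP (size p) (size q)) => H.
- by rewrite lead_coefDr.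
- by rewrite lead_coefDl.
have Hc : (p + q)`_(size p).-1 = lead_coef p + lead_coef q.
  by rewrite coefD /lead_coef H.
have Hpos : 0 < (p + q)`_(size p).-1 by rewrite Hc addr_gt0.
have Hs : size (p + q) = size p.
  apply/eqP; rewrite eqn_leq; apply/andP; split.
    by rewrite (leq_trans (size_polyD _ _)) // -H maxnn.
  have : ((size p).-1 < size (p + q)%R)%N.
    by rewrite ltnNge; apply/negP => /leq_sizeP HH; move: Hpos; rewrite HH // ltxx.
  have : (0 < size p)%N by rewrite size_poly_gt0.
  lia.
by rewrite /lead_coef Hs.
Qed.
Definition Ssum (k : nat) (F : bits k -> rat) : rat := \sum_(x : bits k) F x.
Definition b2r (b : bool) : rat := (b : nat)%:R.

Lemma probE k P : prob k P = Ssum (fun x => b2r (P x)) / (2 ^ k)%:R.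
Proof.
rewrite /prob /Ssum -sum1_card natr_sum big_mkcond /=; congr (_ / _).
by apply: eq_bigr => x _; rewrite inE /b2r; case: (P x).
Qed.

Lemma Ssum_add k (F G : bits k -> rat) : Ssum (fun x => F x + G x) = Ssum F + Ssum G.
Proof. by rewrite /Ssum big_split. Qed.

Lemma Ssum_ext k (F G : bits k -> rat) : (forall x, F x = G x) -> Ssum F = Ssum G.
Proof. by move=> H; apply: eq_bigr => x _. Qed.

Lemma Ssum_const k (c : rat) : Ssum (fun _ : bits k => c) = c * (2 ^ k)%:R.
Proof.
rewrite /Ssum sumr_const card_tuple card_bool mulr_natr.
done.
Qed.

Lemma Ssum_split k (F : bits k.+1 -> rat) :
  Ssum F = Ssum (fun y => F [tuple of false :: y]) + Ssum (fun y => F [tuple of true :: y]).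
Proof.
rewrite /Ssum (reindex (fun p : bool * bits k => [tuple of p.1 :: p.2])) /=.
  rewrite -(pair_big xpredT xpredT (fun (a : bool) (b : bits k) => F [tuple of a :: b])) /=.
  by rewrite big_bool addrC.
exists (fun t : bits k.+1 => (thead t, [tuple of behead t])) => [[a b] _|t _] /=.
  by rewrite theadE; congr pair; apply: val_inj.
by rewrite -tuple_eta.
Qed.

Lemma positive_shift q (c : nat) : positive_poly q -> positive_poly (q + (c.+1)%:R%:P).
Proof. move=> Hq; apply: positive_add => //; by rewrite /positive_poly lead_coefC ltr0n. Qed.

Lemma peval_shift q (c : nat) n : peval (q + (c.+1)%:R%:P) n = peval q n + (c.+1)%:R.
Proof. by rewrite /peval hornerD hornerC. Qed.

Lemma npoly_shift (D D' : nat -> ncircuit) :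
  npoly_size D -> (forall n, (nsize (D' n) <= nsize (D n) + 3)%N) -> npoly_size D'.
Proof.
move=> [q [Hq Hb]] H; exists (q + (2.+1)%:R%:P); split; first exact: positive_shift.
move=> n; rewrite peval_shift; apply: le_trans (_ : (nsize (D n) + 3)%:R <= _).
  by rewrite ler_nat.
by rewrite natrD lerD2r.
Qed.

Lemma poly_shift (D D' : nat -> circuit) :
  poly_size D -> (forall n, (csize (D' n) <= csize (D n) + 3)%N) -> poly_size D'.
Proof.
move=> [q [Hq Hb]] H; exists (q + (2.+1)%:R%:P); split; first exact: positive_shift.
move=> n; rewrite peval_shift; apply: le_trans (_ : (csize (D n) + 3)%:R <= _).
  by rewrite ler_nat.
by rewrite natrD lerD2r.
Qed.

Lemma poly_add (D1 D2 D' : nat -> circuit) :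
  poly_size D1 -> poly_size D2 ->
  (forall n, (csize (D' n) <= csize (D1 n) + csize (D2 n))%N) -> poly_size D'.
Proof.
move=> [q1 [Hq1 Hb1]] [q2 [Hq2 Hb2]] H; exists (q1 + q2); split; first exact: positive_add.
move=> n; rewrite /peval hornerD; apply: le_trans (_ : (csize (D1 n) + csize (D2 n))%:R <= _).
  by rewrite ler_nat.
by rewrite natrD lerD.
Qed.

Lemma pow_pos k : ((2 ^ k)%:R : rat) != 0.
Proof. by rewrite pnatr_eq0 expn_eq0. Qed.

Lemma prob_ext k (P Q : pred (bits k)) : (forall x, P x = Q x) -> prob k P = prob k Q.
Proof. by move=> H; rewrite !probE; congr (_ / _); apply: Ssum_ext => x; rewrite H. Qed.

Lemma prob_true k : prob k (fun _ => true) = 1.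
Proof. by rewrite probE Ssum_const /b2r mul1r divff // pow_pos. Qed.

Lemma prob_split2 k (P Q : pred (bits k)) :
  prob k P = prob k (fun x => P x && Q x) + prob k (fun x => P x && ~~ Q x).
Proof.
rewrite !probE -mulrDl -Ssum_add; congr (_ / _); apply: Ssum_ext => x.
by rewrite /b2r; case: (P x); case: (Q x); rewrite /= ?add0r ?addr0.
Qed.

Lemma prob_compl k (P : pred (bits k)) : prob k P = 1 - prob k (fun x => ~~ P x).
Proof.
have H := prob_true k; rewrite (prob_split2 _ P) in H.
rewrite -H (prob_ext (P := fun x => true && P x) (Q := P)) // addrK.
exact: prob_ext.
Qed.

Lemma prob_split k (P : pred (bits k.+1)) :
  prob k.+1 P = (prob k (fun y => P [tuple of false :: y]) + prob k (fun y => P [tuple of true :: y])) / 2.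
Proof.
rewrite !probE Ssum_split expnS natrM -mulrDl.
have H := pow_pos k.
field; by rewrite H.
Qed.

Lemma nd_front m (A : ncircuit) (y : seq bool) c : size y = m ->
  nd_accepts (NCircuit (nc_wit A) (frontC GOr (m + nc_wit A) (nc_circ A))) (c :: y)
  = nd_accepts A y || c.
Proof.
move=> Hy; rewrite /nd_accepts /=.
rewrite (eq_existsb (P2 := fun w : bits (nc_wit A) => out1 (nc_circ A) (y ++ val w) || c)); last first.
  by move=> w /=; rewrite orC_out // size_cat size_tuple Hy.
case: c; last by rewrite orbF; apply: eq_existsb => w; rewrite orbF.
by rewrite orbT; apply/existsP; exists [tuple of nseq (nc_wit A) false]; rewrite orbT.
Qed.

Lemma nd_front2 m (A : ncircuit) (y : seq bool) c : size y = m ->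
  nd_accepts (NCircuit (nc_wit A) (negC (m + nc_wit A).+1 (frontC GAnd (m + nc_wit A) (nc_circ A)))) (c :: y)
  = ~~ cond_accepts A y || ~~ c.
Proof.
move=> Hy; rewrite /nd_accepts /cond_accepts /=.
rewrite (eq_existsb (P2 := fun w : bits (nc_wit A) => ~~ (out1 (nc_circ A) (y ++ val w) && c))); last first.
  move=> w /=; rewrite negC_out /=; last by rewrite size_cat size_tuple Hy.
  by rewrite andC_out // size_cat size_tuple Hy.
case: c; last first.
  by rewrite orbT; apply/existsP; exists [tuple of nseq (nc_wit A) false]; rewrite andbF.
rewrite orbF negb_forall; apply: eq_existsb => w; by rewrite andbT.
Qed.

Lemma dir2 :
  (exists g : forall n, bits n -> bits n.+1, super_bit g) ->
  (exists (f : forall n, bits n -> bits n) (b : forall n, bits n -> bool),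
      @poly_computable (fun n => n) f /\ @super_core (fun n => n) f b).
Proof.
move=> [g [[Cg [Hpg Heg]] Hsb]].
pose f n (x : bits n) : bits n := [tuple of behead (g n x)].
pose b n (x : bits n) := thead (g n x).
have Hgx : forall n x, val (g n x) = b n x :: val (f n x).
  by move=> n x; rewrite {1}(tuple_eta (g n x)).
exists f, b; split.
  exists (fun n => Circuit (gates (Cg n)) (behead (outs (Cg n)))); split.
    apply: poly_shift Hpg _ => n; rewrite /csize /= size_behead; lia.
  by move=> n x; rewrite evalE /= -behead_map -evalE Heg.
split.
  exists (fun n => Circuit (gates (Cg n)) [:: head 0%N (outs (Cg n))]); split.
    apply: poly_shift Hpg _ => n; rewrite /csize /=; lia.
  move=> n x; have := Heg n x; rewrite !evalE /= Hgx.
  by case: (outs (Cg n)) => [|o os] //= [-> _].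
move=> [p [Hp [[A1 [HA1 Hio]]|[A2 [HA2 Hio]]]]].
- pose D n := NCircuit (nc_wit (A1 n)) (frontC GOr (n + nc_wit (A1 n)) (nc_circ (A1 n))).
  have HD : npoly_size D.
    apply: npoly_shift HA1 _ => n; rewrite /nsize /csize /= size_cat size_map /=; lia.
  have [N HN] := Hsb D HD p Hp.
  have [n [Hn Hv]] := Hio N.
  have := HN n Hn.
  rewrite prob_split /=.
  rewrite [X in (X + _) / 2](prob_ext (Q := fun y : bits n => nd_accepts (A1 n) (val y))); last first.
    by move=> y; rewrite /D nd_front ?size_tuple // orbF.
  rewrite [X in (_ + X) / 2](prob_ext (Q := fun y : bits n => true)); last first.
    by move=> y; rewrite /D nd_front ?size_tuple // orbT.
  rewrite prob_true [X in _ - X]prob_compl.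
  rewrite [X in _ - (1 - X)](prob_ext (Q := fun x => ~~ nd_accepts (A1 n) (val (f n x)) && ~~ b n x)); last first.
    by move=> x; rewrite Hgx /D nd_front ?size_tuple // negb_or.
  move: Hv; lra.
- pose D n := NCircuit (nc_wit (A2 n))
     (negC (n + nc_wit (A2 n)).+1 (frontC GAnd (n + nc_wit (A2 n)) (nc_circ (A2 n)))).
  have HD : npoly_size D.
    apply: npoly_shift HA2 _ => n; rewrite /nsize /csize /= !size_cat size_map /=; lia.
  have [N HN] := Hsb D HD p Hp.
  have [n [Hn Hv]] := Hio N.
  have := HN n Hn.
  rewrite prob_split /=.
  rewrite [X in (X + _) / 2](prob_ext (Q := fun y : bits n => true)); last first.
    by move=> y; rewrite /D nd_front2 ?size_tuple // orbT.
  rewrite [X in (_ + X) / 2](prob_ext (Q := fun y : bits n => ~~ cond_accepts (A2 n) (val y))); last first.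
    by move=> y; rewrite /D nd_front2 ?size_tuple // orbF.
  rewrite prob_true [X in _ - X]prob_compl.
  rewrite [X in _ - (1 - X)](prob_ext (Q := fun x => cond_accepts (A2 n) (val (f n x)) && b n x)); last first.
    by move=> x; rewrite Hgx /D nd_front2 ?size_tuple // negb_or !negbK.
  move: Hv; lra.
Qed.

Lemma nd_fix m (D : ncircuit) (y : seq bool) c : size y = m ->
  nd_accepts (NCircuit (nc_wit D) (fixC (m + nc_wit D) c (nc_circ D))) y
  = nd_accepts D (c :: y).
Proof.
move=> Hy; rewrite /nd_accepts /=; apply: eq_existsb => w /=.
by rewrite fixC_out // size_cat size_tuple Hy.
Qed.

Lemma cond_fix m (D : ncircuit) (y : seq bool) : size y = m ->
  cond_accepts (NCircuit (nc_wit D) (negC (m + nc_wit D) (fixC (m + nc_wit D) true (nc_circ D)))) y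
  = ~~ nd_accepts D (true :: y).
Proof.
move=> Hy; rewrite /nd_accepts /cond_accepts /= negb_exists; apply: eq_forallb => w /=.
by rewrite negC_out ?fixC_out // size_cat size_tuple Hy.
Qed.

Lemma inv_double (x : rat) : (x + x)^-1 = x^-1 / 2.
Proof. have -> : x + x = x * 2 by ring. by rewrite invfM. Qed.

Lemma dir1 :
  (exists (f : forall n, bits n -> bits n) (b : forall n, bits n -> bool),
      @poly_computable (fun n => n) f /\ @super_core (fun n => n) f b) ->
  (exists g : forall n, bits n -> bits n.+1, super_bit g).
Proof.
move=> [f [b [[Cf [Hpf Hef]] [[Cb [Hpb Heb]] Hnc]]]].
pose g n (x : bits n) : bits n.+1 := [tuple of b n x :: f n x].
exists g; split.
  exists (fun n => parC n (Cb n) (Cf n)); split.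
    apply: poly_add Hpb Hpf _ => n; rewrite /csize /= !size_cat !size_map; lia.
  by move=> n x; rewrite parC_eval ?size_tuple // Heb Hef.
move=> D HD p Hp.
pose D0 n := NCircuit (nc_wit (D n)) (fixC (n + nc_wit (D n)) false (nc_circ (D n))).
pose A2 n := NCircuit (nc_wit (D n))
   (negC (n + nc_wit (D n)) (fixC (n + nc_wit (D n)) true (nc_circ (D n)))).
have HD0 : npoly_size D0.
  apply: npoly_shift HD _ => n; rewrite /nsize /csize /= !size_map; lia.
have HA2 : npoly_size A2.
  apply: npoly_shift HD _ => n; rewrite /nsize /csize /= size_cat /= !size_map; lia.
pose V1 n := prob n (fun x => ~~ nd_accepts (D0 n) (val (f n x)) && ~~ b n x)
          + 2^-1 * prob n (fun y => nd_accepts (D0 n) (val y)).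
pose V2 n := prob n (fun x => cond_accepts (A2 n) (val (f n x)) && b n x)
          + 2^-1 * prob n (fun y => ~~ cond_accepts (A2 n) (val y)).
pose e n := (peval p n)^-1.
pose dif n := prob n.+1 (fun y => nd_accepts (D n) (val y))
            - prob n (fun x => nd_accepts (D n) (val (g n x))).
have Hsum : forall n, V1 n + V2 n = 1 + dif n.
  move=> n; rewrite /V1 /V2 /dif prob_split.
  rewrite [X in (X + _) / 2](prob_ext (Q := fun y : bits n => nd_accepts (D0 n) (val y))); last first.
    by move=> y; rewrite /D0 nd_fix ?size_tuple.
  rewrite [X in (_ + X) / 2](prob_ext (Q := fun y : bits n => ~~ cond_accepts (A2 n) (val y))); last first.
    by move=> y; rewrite /A2 cond_fix ?size_tuple // negbK.
  rewrite [X in _ - X]prob_compl [X in _ - (1 - X)](prob_split2 _ (fun x => ~~ b n x)).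
  rewrite [X in _ - (1 - (X + _))](prob_ext (Q := fun x => ~~ nd_accepts (D0 n) (val (f n x)) && ~~ b n x)); last first.
    by move=> x; rewrite /D0 nd_fix ?size_tuple //=; case: (b n x); rewrite /= ?andbF ?andbT.
  rewrite [X in _ - (1 - (_ + X))](prob_ext (Q := fun x => cond_accepts (A2 n) (val (f n x)) && b n x)); last first.
    by move=> x; rewrite /A2 cond_fix ?size_tuple //=; case: (b n x); rewrite /= ?andbF ?andbT.
  lra.
have key : forall n, ~ (dif n < e n) ->
    2^-1 + (peval (p + p) n)^-1 <= V1 n \/ 2^-1 + (peval (p + p) n)^-1 <= V2 n.
  move=> n Hn; rewrite /peval hornerD -/(peval p n) (inv_double (peval p n)) -/(e n).
  have H1 : e n <= dif n by rewrite leNgt; apply/negP.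
  have := Hsum n.
  case: (lerP (2^-1 + e n / 2) (V1 n)) => H; first by move=> _; left.
  move=> E; right; lra.
apply: Classical_Prop.NNPP => Hne.
apply: Hnc; exists (p + p); split; first exact: positive_add.
apply: Classical_Prop.NNPP => Hor.
have Hio1 : ~ infinitely_often (fun n => 2^-1 + (peval (p + p) n)^-1 <= V1 n).
  by move=> H; apply: Hor; left; exists D0; split.
have Hio2 : ~ infinitely_often (fun n => 2^-1 + (peval (p + p) n)^-1 <= V2 n).
  by move=> H; apply: Hor; right; exists A2; split.
have [N1 HN1] : exists N, forall n, (N <= n)%N -> ~ (2^-1 + (peval (p + p) n)^-1 <= V1 n).
  apply: Classical_Prop.NNPP => H; apply: Hio1 => N; apply: Classical_Prop.NNPP => H'.
  apply: H; exists N => n Hn Hv; apply: H'; by exists n.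
have [N2 HN2] : exists N, forall n, (N <= n)%N -> ~ (2^-1 + (peval (p + p) n)^-1 <= V2 n).
  apply: Classical_Prop.NNPP => H; apply: Hio2 => N; apply: Classical_Prop.NNPP => H'.
  apply: H; exists N => n Hn Hv; apply: H'; by exists n.
apply: Hne; exists (maxn N1 N2) => n Hn.
apply: Classical_Prop.NNPP => Hd.
have [] := key n Hd.
  by apply: HN1; apply: leq_trans Hn; apply: leq_maxl.
by apply: HN2; apply: leq_trans Hn; apply: leq_maxr.
Qed.

Theorem theorem6p5 :
  (exists (f : forall n, bits n -> bits n) (b : forall n, bits n -> bool),
      @poly_computable (fun n => n) f /\ @super_core (fun n => n) f b)
  <->
  (exists g : forall n, bits n -> bits n.+1, super_bit g).
Proof. split; [exact: dir1 | exact: dir2]. Qed.
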